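(* Let $n\ge1$, $a_{i0}\ge0$, $a_{ij}\ge 0$ and $\pi_i>0$ for $i,j=1,\ldots,n$, let $\varepsilon>0$, and let $\mu_1,\ldots,\mu_n$ satisfy $\mu_i\ge\sum_{j\ne i}(a_{ij}+a_{ji})/2$. For $u\in(0,\infty)^n$ define $$A_{ij}(u)=\delta_{ij}a_{i0}+\delta_{ij}\sum_{k=1}^na_{ik}u_k+a_{ij}u_i,\qquad H_{ij}(u)=\delta_{ij}\frac{\pi_i}{u_i^{2}},$$ $$H_{\varepsilon,ij}(u)=\delta_{ij}\Big(\frac{\pi_i}{u_i^2}+\frac{\varepsilon}{u_i}\Big),\qquad A_\varepsilon(u)=A(u)+\varepsilon A^0(u),\quad A^0_{ij}(u)=\delta_{ij}\frac{\mu_i}{\pi_i}u_i^2.$$ Then for all $z\in\mathbb{R}^n$ and $u\in(0,\infty)^n$, $$z^TH_\varepsilon(u)A_\varepsilon(u)z\ge z^TH(u)A(u)z+2\varepsilon\sum_{i=1}^na_{ii}z_i^2+\varepsilon^2\sum_{i=1}^n\frac{\mu_i}{\pi_i}u_iz_i^2.$$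
   Context: $\delta_{ij}$ is the Kronecker symbol. $H_\varepsilon(u)$ is the Hessian of $h(u)+\varepsilon\sum_iu_i(\log u_i-1)$ with $h(u)=\sum_i\pi_i(u_i-\log u_i)$. *)

(* Defs.v *)
From mathcomp Require Import all_boot all_order all_algebra.
Set Implicit Arguments. Unset Strict Implicit. Unset Printing Implicit Defensive.
Import Order.TTheory GRing.Theory Num.Theory.
Local Open Scope ring_scope.

Definition Amat (R : realFieldType) (n : nat) (a : 'M[R]_n) (a0 u : 'cV[R]_n)
  : 'M[R]_n :=
  \matrix_(i, j) ((i == j)%:R * a0 i 0 + (i == j)%:R * (\sum_k a i k * u k 0)
                  + a i j * u i 0).

Definition Hmat (R : realFieldType) (n : nat) (pi u : 'cV[R]_n) : 'M[R]_n :=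
  \matrix_(i, j) ((i == j)%:R * (pi i 0 / u i 0 ^+ 2)).

Definition Hepsmat (R : realFieldType) (n : nat) (eps : R) (pi u : 'cV[R]_n)
  : 'M[R]_n :=
  \matrix_(i, j) ((i == j)%:R * (pi i 0 / u i 0 ^+ 2 + eps / u i 0)).

Definition A0mat (R : realFieldType) (n : nat) (mu pi u : 'cV[R]_n) : 'M[R]_n :=
  \matrix_(i, j) ((i == j)%:R * (mu i 0 / pi i 0 * u i 0 ^+ 2)).

Definition Aepsmat (R : realFieldType) (n : nat) (eps : R) (a : 'M[R]_n)
  (a0 mu pi u : 'cV[R]_n) : 'M[R]_n :=
  Amat a a0 u + eps *: A0mat mu pi u.

Definition qform (R : realFieldType) (n : nat) (M : 'M[R]_n) (z : 'cV[R]_n) : R :=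
  (z^T *m M *m z) 0 0.

(* Main.v *)
Require Import Defs.
From mathcomp Require Import all_boot all_order all_algebra ring lra.
Import Order.TTheory GRing.Theory Num.Theory.
Local Open Scope ring_scope.

Lemma sum_delta (R : realFieldType) (n : nat) (i : 'I_n) (f : 'I_n -> R) :
  \sum_j (i == j)%:R * f j = f i.
Proof.
rewrite (bigD1 i) //= big1 ?addr0 ?eqxx ?mul1r //.
by move=> k /negbTE; rewrite eq_sym => ->; rewrite mul0r.
Qed.

Lemma qform_diag (R : realFieldType) (n : nat) (d : 'I_n -> R) (B : 'M[R]_n) z :
  qform ((\matrix_(i, j) ((i == j)%:R * d i)) *m B) z =
  \sum_i \sum_j z i 0 * d i * B i j * z j 0.
Proof.
have E : forall i j, ((\matrix_(i, j) ((i == j)%:R * d i)) *m B) i j = d i * B i j.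
  move=> i j; rewrite mxE.
  under eq_bigr => k _ do rewrite mxE -mulrA.
  by rewrite sum_delta.
rewrite /qform !mxE exchange_big /=; apply: eq_bigr => j _.
rewrite mxE big_distrl /=; apply: eq_bigr => i _; rewrite E !mxE; ring.
Qed.

Lemma bound2 (R : realFieldType) (n : nat) (a : 'M[R]_n) (mu z : 'cV[R]_n) :
  (forall i j, 0 <= a i j) ->
  (forall i, mu i 0 >= \sum_(j | j != i) (a i j + a j i) / 2) ->
  \sum_i a i i * z i 0 ^+ 2 <=
  \sum_i \sum_j a i j * z i 0 * z j 0 + \sum_i mu i 0 * z i 0 ^+ 2.
Proof.
move=> ha hmu.
have P1 : \sum_i \sum_j ((i == j)%:R * (2 * a i j * z i 0 * z j 0)
            - a i j * z i 0 ^+ 2 / 2 - a i j * z j 0 ^+ 2 / 2)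
          <= \sum_i \sum_j a i j * z i 0 * z j 0.
  apply: ler_sum => i _; apply: ler_sum => j _.
  case: eqVneq => [<-|hij]; first by rewrite mul1r; lra.
  rewrite mul0r; have := mulr_ge0 (ha i j) (sqr_ge0 (z i 0 + z j 0)); nra.
have P2 : \sum_i \sum_j ((i == j)%:R * (2 * a i j * z i 0 * z j 0)
            - a i j * z i 0 ^+ 2 / 2 - a i j * z j 0 ^+ 2 / 2)
   = \sum_i (2 * a i i * z i 0 ^+ 2)
     - \sum_i (\sum_j (a i j + a j i) / 2) * z i 0 ^+ 2.
  have Q1 : \sum_i \sum_j (i == j)%:R * (2 * a i j * z i 0 * z j 0)
      = \sum_i (2 * a i i * z i 0 ^+ 2).
    by apply: eq_bigr => i _; rewrite sum_delta /=; ring.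
  have Q2 : \sum_i \sum_j a i j * z j 0 ^+ 2 / 2
      = \sum_i \sum_j a j i * z i 0 ^+ 2 / 2 by rewrite exchange_big.
  have Q3 : \sum_i (\sum_j (a i j + a j i) / 2) * z i 0 ^+ 2
      = \sum_i \sum_j a i j * z i 0 ^+ 2 / 2 + \sum_i \sum_j a j i * z i 0 ^+ 2 / 2.
    rewrite -big_split; apply: eq_bigr => i _ /=.
    rewrite -big_split big_distrl; apply: eq_bigr => j _ /=; ring.
  under eq_bigr do rewrite !sumrB.
  rewrite !sumrB Q1 Q2 Q3; ring.
have P3 : \sum_i (\sum_j (a i j + a j i) / 2) * z i 0 ^+ 2 <=
          \sum_i (a i i + mu i 0) * z i 0 ^+ 2.
  apply: ler_sum => i _; apply: ler_wpM2r; first exact: sqr_ge0.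
  rewrite (bigD1 i) //=; have := hmu i; lra.
have P4 : \sum_i (a i i + mu i 0) * z i 0 ^+ 2 =
   \sum_i a i i * z i 0 ^+ 2 + \sum_i mu i 0 * z i 0 ^+ 2.
  rewrite -big_split; apply: eq_bigr => i _ /=; ring.
have P5 : \sum_i (2 * a i i * z i 0 ^+ 2) = 2 * \sum_i a i i * z i 0 ^+ 2.
  rewrite big_distrr; apply: eq_bigr => i _ /=; ring.
lra.
Qed.

Lemma keyK (R : realFieldType) (n : nat) (a : 'M[R]_n)
  (a0 mu z u : 'cV[R]_n) :
  (forall i, 0 <= a0 i 0) ->
  (forall i j, 0 <= a i j) ->
  (forall i, mu i 0 >= \sum_(j | j != i) (a i j + a j i) / 2) ->
  (forall i, 0 < u i 0) ->
  2 * \sum_i a i i * z i 0 ^+ 2 <=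
  \sum_i \sum_j z i 0 * (u i 0)^-1 * Amat a a0 u i j * z j 0
  + \sum_i mu i 0 * z i 0 ^+ 2.
Proof.
move=> ha0 ha hmu hu.
have E : \sum_i \sum_j z i 0 * (u i 0)^-1 * Amat a a0 u i j * z j 0 =
  \sum_i z i 0 * (u i 0)^-1 * (a0 i 0 + \sum_k a i k * u k 0) * z i 0
  + \sum_i \sum_j a i j * z i 0 * z j 0.
  rewrite -big_split; apply: eq_bigr => i _ /=.
  have hi : u i 0 != 0 by rewrite gt_eqF.
  rewrite -(@sum_delta _ _ i (fun j => z i 0 * (u i 0)^-1 * (a0 i 0 + \sum_k a i k * u k 0) * z j 0)) -big_split; apply: eq_bigr => j _ /=.
  by rewrite mxE; field.
have B1 : \sum_i a i i * z i 0 ^+ 2 <=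
  \sum_i z i 0 * (u i 0)^-1 * (a0 i 0 + \sum_k a i k * u k 0) * z i 0.
  apply: ler_sum => i _.
  have hi := hu i.
  have T : a i i * u i 0 <= \sum_k a i k * u k 0.
    rewrite (bigD1 i) //= lerDl; apply: sumr_ge0 => k _.
    by apply: mulr_ge0 => //; apply: ltW.
  have T2 : a i i <= (u i 0)^-1 * (a0 i 0 + \sum_k a i k * u k 0).
    rewrite -(ler_pM2l hi) mulrA divff ?gt_eqF // mul1r.
    have := ha0 i; lra.
  have := ler_wpM2r (sqr_ge0 (z i 0)) T2.
  move=> h; apply: (le_trans h); rewrite le_eqVlt; apply/orP; left; apply/eqP; ring.
have := @bound2 _ _ a mu z ha hmu.
rewrite E; lra.
Qed.

Theorem lemma4 (R : realFieldType) (n : nat) (a : 'M[R]_n)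
  (a0 pi mu : 'cV[R]_n) (eps : R) :
  (0 < n)%N ->
  (forall i, 0 <= a0 i 0) ->
  (forall i j, 0 <= a i j) ->
  (forall i, 0 < pi i 0) ->
  0 < eps ->
  (forall i, mu i 0 >= \sum_(j | j != i) (a i j + a j i) / 2) ->
  forall (z u : 'cV[R]_n), (forall i, 0 < u i 0) ->
    qform (Hepsmat eps pi u *m Aepsmat eps a a0 mu pi u) z >=
    qform (Hmat pi u *m Amat a a0 u) z
    + 2 * eps * (\sum_i a i i * z i 0 ^+ 2)
    + eps ^+ 2 * (\sum_i mu i 0 / pi i 0 * u i 0 * z i 0 ^+ 2).
Proof.
move=> _ ha0 ha hpi heps hmu z u hu.
have -> : qform (Hmat pi u *m Amat a a0 u) z =
   \sum_i \sum_j z i 0 * (pi i 0 / u i 0 ^+ 2) * Amat a a0 u i j * z j 0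
  := @qform_diag R n (fun i => pi i 0 / u i 0 ^+ 2) _ z.
have -> : qform (Hepsmat eps pi u *m Aepsmat eps a a0 mu pi u) z =
   \sum_i \sum_j z i 0 * (pi i 0 / u i 0 ^+ 2 + eps / u i 0)
     * Aepsmat eps a a0 mu pi u i j * z j 0
  := @qform_diag R n (fun i => pi i 0 / u i 0 ^+ 2 + eps / u i 0) _ z.
set X := \sum_i \sum_j z i 0 * (pi i 0 / u i 0 ^+ 2) * Amat a a0 u i j * z j 0.
set S := \sum_i \sum_j z i 0 * (u i 0)^-1 * Amat a a0 u i j * z j 0.
have K : 2 * (\sum_i a i i * z i 0 ^+ 2) <= S + \sum_i mu i 0 * z i 0 ^+ 2
  := @keyK _ _ a a0 mu z u ha0 ha hmu hu.
have E : \sum_i \sum_j z i 0 * (pi i 0 / u i 0 ^+ 2 + eps / u i 0)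
     * Aepsmat eps a a0 mu pi u i j * z j 0 =
   X + eps * S + \sum_i (eps * (mu i 0 * z i 0 ^+ 2)
        + eps ^+ 2 * (mu i 0 / pi i 0 * u i 0 * z i 0 ^+ 2)).
  rewrite /X /S big_distrr -!big_split; apply: eq_bigr => i _ /=.
  have hi : u i 0 != 0 by rewrite gt_eqF.
  have hp : pi i 0 != 0 by rewrite gt_eqF.
  rewrite (eq_bigr (fun j => z i 0 * (pi i 0 / u i 0 ^+ 2) * Amat a a0 u i j * z j 0
      + eps * (z i 0 * (u i 0)^-1 * Amat a a0 u i j * z j 0)
      + (i == j)%:R * (z i 0 * (pi i 0 / u i 0 ^+ 2 + eps / u i 0)
       * (eps * (mu i 0 / pi i 0 * u i 0 ^+ 2)) * z j 0))); last first.
    move=> j _; rewrite !mxE.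
    case: eqVneq => [<-|_]; rewrite ?mul1r ?mul0r; field; by rewrite ?hi ?hp.
  rewrite !big_split /= sum_delta big_distrr /=.
  congr (_ + _); field; by rewrite ?hi ?hp.
rewrite E big_split /= -!big_distrr /=.
have : 0 <= eps * (S + \sum_i mu i 0 * z i 0 ^+ 2 - 2 * \sum_i a i i * z i 0 ^+ 2).
  apply: mulr_ge0; [exact: ltW | lra].

lra.
Qed.
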